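(* Let $\mathcal G=((V,E),(V_1,V_2,V_\Diamond),\delta,w)$ be a stochastic game and let $\mathsf r$ be a real vector indexed by $V$ that satisfies the Bellman condition, with classes $C_1,\dots,C_k$. Then for every $1\le i\le k$, $\mathcal G_{C_i}$ is a stochastic game, i.e., every vertex of $\mathcal G_{C_i}$ has at least one out-neighbour in $\mathcal G_{C_i}$ and for every probabilistic vertex of $\mathcal G_{C_i}$ the probabilities of its out-edges in $\mathcal G_{C_i}$ sum to $1$.
   Context: A stochastic game is $\mathcal{G}=((V,E),(V_1,V_2,V_\Diamond),\delta,w)$: a finite directed graph $(V,E)$ in which every vertex $v$ has a nonempty out-neighbour set $E(v)$, a partition of $V$ into Player 1, Player 2 and probabilistic vertices, a function $\delta$ giving each $v\in V_\Diamond$ a probability distribution $\delta(v)$ on $E(v)$, positive on every out-neighbour, and payoffs $w:E\to\mathbb{Q}$. For a real vector $\mathsf r=(r_v)_{v\in V}$, its classes $C_1,\dots,C_k$ are the maximal nonempty sets of vertices on which $\mathsf r$ is constant. A vertex $v\in C_i$ is a boundary vertex if $v\in V_\Diamond$ and $E(v)\not\subseteq C_i$; $\mathrm{Bnd}_i$ is the set of boundary vertices of $C_i$. $\mathcal G_{C_i}$ is obtained by restricting $\mathcal G$ to the vertices of $C_i$ (keeping the edges of $\mathcal G$ between vertices of $C_i$, ownership, probabilities and payoffs) and changing every vertex of $\mathrm{Bnd}_i$ into an absorbing vertex whose only out-edge is a self-loop (probability 1, payoff 0). $\mathsf r$ satisfies the Bellman condition if for every $v$: $r_v=\max_{v'\in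 E(v)}r_{v'}$ if $v\in V_1$, $r_v=\min_{v'\in E(v)}r_{v'}$ if $v\in V_2$, $r_v=\sum_{v'\in E(v)}\delta(v)(v')r_{v'}$ if $v\in V_\Diamond$. *)

(* Defs.v *)
From mathcomp Require Import all_boot all_order all_algebra.
Set Implicit Arguments. Unset Strict Implicit. Unset Printing Implicit Defensive.
Import Order.TTheory GRing.Theory Num.Theory.
Local Open Scope ring_scope.

Inductive player := P1 | P2 | PR.

Definition is_prob (p : player) : bool := if p is PR then true else false.

(* A game structure on a finite vertex type V: edge relation E, ownership,
   transition probabilities delta (only meaningful on edges out of
   probabilistic vertices) and payoffs w (on edges). *)
Record game (V : finType) := Game {
  edge : rel V;
  owner : V -> player;
  prob : V -> V -> rat;
  payoff : V -> V -> rat }.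

Definition is_stochastic_game (V : finType) (G : game V) : Prop :=
  (forall v, exists u, edge G v u) /\
  (forall v, owner G v = PR ->
     (forall u, edge G v u -> 0 < prob G v u) /\
     \sum_(u | edge G v u) prob G v u = 1).

Definition bellman (V : finType) (G : game V) (R : realFieldType) (r : V -> R)
  : Prop :=
  forall v,
  match owner G v with
  | P1 => (exists2 u, edge G v u & r v = r u) /\
          (forall u, edge G v u -> r u <= r v)
  | P2 => (exists2 u, edge G v u & r v = r u) /\
          (forall u, edge G v u -> r v <= r u)
  | PR => r v = \sum_(u | edge G v u) ratr (prob G v u) * r u
  end.

(* The class of r containing v0 (classes are exactly these sets). *)
Definition rclass (V : finType) (R : realFieldType) (r : V -> R) (v0 : V)
  : {set V} := [set u | r u == r v0].

Definition boundary (V : finType) (G : game V) (C : {set V}) (v : V) : bool :=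
  is_prob (owner G v) && [exists u, edge G v u && (u \notin C)].

Definition restrict (V : finType) (G : game V) (C : {set V})
  : game {v : V | v \in C} :=
  {| edge := fun x y => if boundary G C (val x) then x == y
                        else edge G (val x) (val y);
     owner := fun x => owner G (val x);
     prob := fun x y => if boundary G C (val x) then (x == y)%:R
                        else prob G (val x) (val y);
     payoff := fun x y => if boundary G C (val x) then 0
                          else payoff G (val x) (val y) |}.

(* Main.v *)
Require Import Defs.
From mathcomp Require Import all_boot all_order all_algebra.
Import Order.TTheory GRing.Theory Num.Theory.
Local Open Scope ring_scope.

Theorem proposition3 (V : finType) (G : game V) (R : realFieldType)
  (r : V -> R) :
  is_stochastic_game G -> bellman G r ->
  forall v0 : V, is_stochastic_game (restrict G (rclass r v0)).
Proof.
move=> [Hex Hpr] Hb v0.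
set C := rclass r v0.
have inC : forall x u : V, x \in C -> r u = r x -> u \in C.
  by move=> x u; rewrite !inE => /eqP <- ->.
have nb : forall x : V, ~~ boundary G C x -> owner G x = PR ->
    forall u, edge G x u -> u \in C.
  move=> x Hx Ho u Hu; apply/negPn/negP => Hn; move/negP: Hx; apply.
  by rewrite /boundary Ho /=; apply/existsP; exists u; rewrite Hu Hn.
split.
- move=> [x xC] /=.
  case Hbd: (boundary G C x).
    by exists (exist _ x xC).
  have := Hb x; case Ho: (owner G x).
  + move=> [[u Hu Hr] _]; exists (exist _ u (inC x u xC (esym Hr))); exact Hu.
  + move=> [[u Hu Hr] _]; exists (exist _ u (inC x u xC (esym Hr))); exact Hu.
  + move=> _; have [u Hu] := Hex x.
    by exists (exist _ u (nb x (negbT Hbd) Ho u Hu)).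
- move=> [x xC] /= Ho.
  case Hbd: (boundary G C x).
    split; first by move=> y /eqP ->; rewrite eqxx ltr01.
    rewrite (big_pred1 (exist _ x xC)) ?eqxx // => y /=.
  have [Hpos Hsum] := Hpr x Ho.
  split; first by move=> y; apply: Hpos.
  rewrite -Hsum.
  rewrite -(big_sub_cond C (fun u => edge G x u) (fun u => prob G x u)).
  apply: eq_bigl => u /=.
  case Hu: (edge G x u); last by rewrite andbF.
  by rewrite andbT (nb x (negbT Hbd) Ho u Hu).
Qed.
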